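(* Let $n$ items have positive integer sizes $w_1\le w_2\le\dots\le w_n$, with total size $W=\sum_{i=1}^n w_i$, and let there be $m$ bins, bin $j$ having positive integer capacity $C_j$, fixed cost $f_j\ge 0$ and unit cost $c_j\ge 0$, where $\sum_{j=1}^m C_j\ge W$. For each bin set $r_j=f_j/C_j+c_j$, let $a_1,\dots,a_m$ be a permutation of $\{1,\dots,m\}$ with $r_{a_1}\le r_{a_2}\le\dots\le r_{a_m}$, and let $k$ be the minimum integer such that $\sum_{j=1}^{k}C_{a_j}\ge W$. Define $$Lb_1=\sum_{j=1}^{k-1}C_{a_j}r_{a_j}+\Big(W-\sum_{j=1}^{k-1}C_{a_j}\Big)r_{a_k}.$$ Then $Lb_1$ equals the optimal value of the linear program $$\min \sum_{j=1}^m (f_jy_j+c_jl_j)$$ subject to $\sum_{j=1}^m x_{ij}=1$ for all $i\in\{1,\dots,n\}$; $\sum_{i=1}^n w_ix_{ij}=l_j$ for all $j\in\{1,\dots,m\}$; $l_j\le C_jy_j$ for all $j$; $0\le x_{ij}\le 1$, $0\le y_j\le 1$, $l_j\ge 0$ for all $i,j$.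
   Context: This linear program is the linear relaxation of an integer program for the Bin Packing with Usage Cost problem, in which each item is assigned to exactly one bin, the load $l_j$ of bin $j$ (total size of its items) may not exceed $C_j$, and a used bin $j$ costs $f_j+c_jl_j$; $y_j$ indicates whether bin $j$ is used and $x_{ij}$ whether item $i$ is in bin $j$. *)

(* Defs.v *)
From HB Require Import structures.
From mathcomp Require Import all_boot all_order all_algebra all_fingroup.
Set Implicit Arguments. Unset Strict Implicit. Unset Printing Implicit Defensive.
Import Order.TTheory GRing.Theory Num.Theory.
Local Open Scope ring_scope.

Definition total_size (n : nat) (w : 'I_n -> nat) : nat := (\sum_(i < n) w i)%N.

Definition bin_ratio (R : realFieldType) (m : nat) (C : 'I_m -> nat) (f c : 'I_m -> R)
  (j : 'I_m) : R := f j / (C j)%:R + c j.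

(* Lb_1, with kk the 0-based position of a_k in the sorted order (kk = k - 1) *)
Definition Lb1 (R : realFieldType) (n m : nat) (w : 'I_n -> nat) (C : 'I_m -> nat)
  (f c : 'I_m -> R) (a : {perm 'I_m}) (kk : 'I_m) : R :=
  \sum_(j < m | (j < kk)%N) (C (a j))%:R * bin_ratio C f c (a j)
  + ((total_size w)%:R - \sum_(j < m | (j < kk)%N) (C (a j))%:R)
      * bin_ratio C f c (a kk).

Definition lp_feasible (R : realFieldType) (n m : nat) (w : 'I_n -> nat)
  (C : 'I_m -> nat) (x : 'I_n -> 'I_m -> R) (y l : 'I_m -> R) : Prop :=
  (forall i, \sum_(j < m) x i j = 1) /\
  (forall j, \sum_(i < n) (w i)%:R * x i j = l j) /\
  (forall j, l j <= (C j)%:R * y j) /\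
  (forall i j, 0 <= x i j <= 1) /\
  (forall j, 0 <= y j <= 1) /\
  (forall j, 0 <= l j).

Definition lp_objective (R : realFieldType) (m : nat) (f c : 'I_m -> R)
  (y l : 'I_m -> R) : R := \sum_(j < m) (f j * y j + c j * l j).

(* Main.v *)
Require Import Defs.
From HB Require Import structures.
From mathcomp Require Import all_boot all_order all_algebra all_fingroup.
From mathcomp Require Import zify ring lra.
Import Order.TTheory GRing.Theory Num.Theory.
Local Open Scope ring_scope.

Lemma nat_facts (n m : nat) (w : 'I_n -> nat) (C : 'I_m -> nat) (a : {perm 'I_m}) (kk : 'I_m) :
  (total_size w <= \sum_(j < m | (j <= kk)%N) C (a j))%N ->
  (forall k' : 'I_m, (total_size w <= \sum_(j < m | (j <= k')%N) C (a j))%N ->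
      (kk <= k')%N) ->
  [/\ (\sum_(j < m | (j <= kk)%N) C (a j) = \sum_(j < m | (j < kk)%N) C (a j) + C (a kk))%N,
      (\sum_(j < m | (j < kk)%N) C (a j) <= total_size w)%N &
      forall p : 'I_m, (p < kk)%N -> (C (a p) <= \sum_(j < m | (j < kk)%N) C (a j))%N].
Proof.
move=> H1 Hmin; split.
- rewrite (bigD1 kk) //= addnC; congr (_ + _); apply: eq_bigl => j.
  by rewrite ltn_neqAle andbC.
- have [kk0|kkpos] := posnP kk.
    by rewrite big1 // => j; rewrite kk0 ltn0.
  apply: ltnW; rewrite ltnNge; apply/negP => H.
  have hlt : (kk.-1 < m)%N by apply: leq_ltn_trans (leq_pred kk) (ltn_ord kk).
  have := Hmin (Ordinal hlt).
  have -> : (\sum_(j < m | (j <= Ordinal hlt)%N) C (a j) = \sum_(j < m | (j < kk)%N) C (a j))%N.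
    by apply: eq_bigl => j /=; rewrite -ltnS prednK.
  move=> /(_ H) /=; lia.
- by move=> p hp; rewrite (bigD1 p) //= leq_addr.
Qed.
Lemma lower (R : realFieldType) (n m : nat)
  (w : 'I_n -> nat) (C : 'I_m -> nat) (f c : 'I_m -> R)
  (a : {perm 'I_m}) (kk : 'I_m) :
  (forall j, (0 < C j)%N) ->
  (forall j, 0 <= f j) ->
  (forall i j : 'I_m, (i <= j)%N -> bin_ratio C f c (a i) <= bin_ratio C f c (a j)) ->
  (forall x y l, lp_feasible w C x y l -> Lb1 w C f c a kk <= lp_objective f c y l).
Proof.
move=> HC Hf Hr x y l [hx [hl [hly [hx01 [hy01 hl0]]]]].
set r := bin_ratio C f c.
have hlC j : l j <= (C j)%:R.
  apply: le_trans (hly j) _; rewrite -[X in _ <= X]mulr1 ler_wpM2l ?ler0n //.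
  by case/andP: (hy01 j).
have hsum : \sum_j l j = (total_size w)%:R.
  rewrite -(eq_bigr _ (fun j _ => hl j)) exchange_big /=.
  under eq_bigr do rewrite -mulr_sumr hx mulr1.
  by rewrite /total_size natr_sum.
have hobj : \sum_j r j * l j <= lp_objective f c y l.
  apply: ler_sum => j _; rewrite /r /bin_ratio mulrDl lerD2r.
  have hC : (0 : R) < (C j)%:R by rewrite ltr0n.
  have : l j / (C j)%:R <= y j by rewrite ler_pdivrMr // mulrC.
  move=> h; rewrite -mulrA [_^-1 * _]mulrC ler_wpM2l //.
apply: le_trans hobj.
rewrite (reindex_inj (@perm_inj _ a)) /=.
rewrite (reindex_inj (@perm_inj _ a)) /= in hsum.
set rs := r (a kk).
have step : \sum_p (rs * l (a p) + (if (p < kk)%N then (r (a p) - rs) * (C (a p))%:R else 0))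
   <= \sum_p r (a p) * l (a p).
  apply: ler_sum => p _.
  have h0 := hl0 (a p); have h1 := hlC (a p).
  case: ifP => hp.
    have : r (a p) <= rs by apply: Hr; apply: ltnW.
    move=> hh; nra.
  have : rs <= r (a p) by apply: Hr; rewrite leqNgt hp.
  move=> hh; nra.
apply: le_trans step.
rewrite big_split /= -mulr_sumr hsum -big_mkcond /=.
under eq_bigr do rewrite mulrBl.
rewrite sumrB -mulr_sumr /Lb1.
under [X in _ <= _ + (X - _)]eq_bigr do rewrite mulrC.
rewrite -/r -/rs le_eqVlt; apply/orP; left; apply/eqP; ring.
Qed.
Lemma upper (R : realFieldType) (n m : nat)
  (w : 'I_n -> nat) (C : 'I_m -> nat) (f c : 'I_m -> R)
  (a : {perm 'I_m}) (kk : 'I_m) :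
  (forall j, (0 < C j)%N) ->
  (0 : R) < (total_size w)%:R ->
  \sum_(j < m | (j < kk)%N) (C (a j))%:R <= ((total_size w)%:R : R) ->
  ((total_size w)%:R : R) <= \sum_(j < m | (j < kk)%N) (C (a j))%:R + (C (a kk))%:R ->
  (forall p : 'I_m, (p < kk)%N -> ((C (a p))%:R : R) <= \sum_(j < m | (j < kk)%N) (C (a j))%:R) ->
  (exists x y l, lp_feasible w C x y l /\ lp_objective f c y l = Lb1 w C f c a kk).
Proof.
move=> HC hW hSW hWS hCp.
set W : R := (total_size w)%:R.
set S : R := \sum_(j < m | (j < kk)%N) (C (a j))%:R.
rewrite -/W -/S in hW hSW hWS hCp.
pose Lp (p : 'I_m) : R := if (p < kk)%N then (C (a p))%:R else if p == kk then W - S else 0.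
pose l (j : 'I_m) : R := Lp (a^-1 j)%g.
have hla p : l (a p) = Lp p by rewrite /l permK.
have hLp p : 0 <= Lp p /\ Lp p <= (C (a p))%:R /\ Lp p <= W.
  rewrite /Lp; case: ifP => hp.
    by split; [rewrite ler0n | split; [|apply: le_trans (hCp p hp) hSW]].
  case: eqP => [->|_]; last by split; [|split]; rewrite ?ler0n //; apply: ltW.
  split; [lra|split; [lra|]].
  have : 0 <= S by apply: sumr_ge0 => j _; rewrite ler0n.
  lra.
have hl j : 0 <= l j /\ l j <= (C j)%:R /\ l j <= W.
  by have := hLp (a^-1 j)%g; rewrite /l permKV.
have hsplit (F : 'I_m -> R) : \sum_p F (a p) * Lp p =
   \sum_(p < m | (p < kk)%N) F (a p) * (C (a p))%:R + F (a kk) * (W - S).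
  rewrite (bigID (fun p : 'I_m => (p < kk)%N)) /=; congr (_ + _).
    by apply: eq_bigr => p hp; rewrite /Lp hp.
  rewrite (bigD1 kk) /=; last by rewrite ltnn.
  rewrite big1 ?addr0; first by rewrite /Lp ltnn eqxx.
  move=> p /andP [hp hne]; rewrite /Lp (negbTE hp) (negbTE hne); exact: mulr0.
have hsum : \sum_j l j = W.
  rewrite (reindex_inj (@perm_inj _ a)) /=.
  under eq_bigr do rewrite hla -[Lp _]mul1r.
  rewrite (hsplit (fun _ => 1)).
  under eq_bigr do rewrite mul1r.
  rewrite mul1r -/S; ring.
have hC j : ((C j)%:R : R) != 0 by rewrite pnatr_eq0 -lt0n.
have hW0 : W != 0 by rewrite gt_eqF.
exists (fun _ j => l j / W), (fun j => l j / (C j)%:R), l; split.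
  split; first by move=> i; rewrite -mulr_suml hsum divff.
  split; first by move=> j; rewrite -mulr_suml -natr_sum -/(total_size w) -/W mulrCA divff // mulr1.
  split; first by move=> j; rewrite mulrC -mulrA mulVf // mulr1.
  split.
    move=> i j; have [h0 [h1 h2]] := hl j.
    by rewrite divr_ge0 ?ler_pdivrMr ?mul1r ?(ltW hW) //= ltr_wpDl.
  split; last by move=> j; case: (hl j).
  move=> j; have [h0 [h1 h2]] := hl j.
  have hc : (0:R) < (C j)%:R by rewrite ltr0n.
  by rewrite divr_ge0 ?ler_pdivrMr ?mul1r ?ler0n.
rewrite /lp_objective.
have -> : \sum_j (f j * (l j / (C j)%:R) + c j * l j) = \sum_j bin_ratio C f c j * l j.
  by apply: eq_bigr => j _; rewrite /bin_ratio; field.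
rewrite (reindex_inj (@perm_inj _ a)) /=.
under eq_bigr do rewrite hla.
rewrite hsplit /Lb1 -/W -/S.
under eq_bigr do rewrite mulrC.
by rewrite mulrC.
Qed.

Theorem proposition2 (R : realFieldType) (n m : nat)
  (w : 'I_n -> nat) (C : 'I_m -> nat) (f c : 'I_m -> R)
  (a : {perm 'I_m}) (kk : 'I_m) :
  (0 < n)%N ->
  (forall i, (0 < w i)%N) ->
  (forall i j : 'I_n, (i <= j)%N -> (w i <= w j)%N) ->
  (forall j, (0 < C j)%N) ->
  (forall j, 0 <= f j) ->
  (forall j, 0 <= c j) ->
  (total_size w <= \sum_(j < m) C j)%N ->
  (forall i j : 'I_m, (i <= j)%N -> bin_ratio C f c (a i) <= bin_ratio C f c (a j)) ->
  (* k = kk + 1 is the minimum integer with sum_{j=1}^k C_{a_j} >= W *)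
  (total_size w <= \sum_(j < m | (j <= kk)%N) C (a j))%N ->
  (forall k' : 'I_m, (total_size w <= \sum_(j < m | (j <= k')%N) C (a j))%N ->
      (kk <= k')%N) ->
  (exists x y l, lp_feasible w C x y l /\ lp_objective f c y l = Lb1 w C f c a kk)
  /\ (forall x y l, lp_feasible w C x y l -> Lb1 w C f c a kk <= lp_objective f c y l).
Proof.
move=> Hn Hw _ HC Hf _ _ Hr H1 Hmin.
split; last exact: lower.
have [Hs HSW HCp] := @nat_facts n m w C a kk H1 Hmin.
apply: upper => //.
- rewrite ltr0n /total_size (bigD1 (Ordinal Hn)) //=.
  exact: leq_trans (Hw _) (leq_addr _ _).
- by rewrite -natr_sum ler_nat.
- by rewrite -natr_sum -natrD ler_nat -Hs.
- by move=> p hp; rewrite -natr_sum ler_nat HCp.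
Qed.
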